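(* Let $J$ be either a closed interval or a circle, let $n\geq 4$, let $\gamma:J\to\mathbb{R}^n$ be an injective continuous map of bounded variation, and let $\varepsilon>0$. Let $P:\mathbb{R}^n\to\mathbb{R}^{n-1}$ be the projection onto the last $n-1$ coordinates. Then there exists a linear operator $T:\mathbb{R}^n\to\mathbb{R}^{n-1}$ with $\|T-P\|<\varepsilon$ such that $T\circ\gamma$ is injective.
   Context: $\|\cdot\|$ denotes the operator norm with respect to the Euclidean norms. *)

(* Defs.v *)
From HB Require Import structures.
From mathcomp Require Import all_boot all_order all_algebra.
From mathcomp Require Import all_classical all_reals all_analysis.
Set Implicit Arguments. Unset Strict Implicit. Unset Printing Implicit Defensive.
Import Order.TTheory GRing.Theory Num.Theory.
Import numFieldNormedType.Exports.
Local Open Scope classical_set_scope.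
Local Open Scope ring_scope.

Definition enorm {R : realType} {k : nat} (v : 'rV[R]_k) : R :=
  Num.sqrt (\sum_(i < k) v ord0 i ^+ 2).

Definition opnorm {R : realType} {p q : nat} (A : 'M[R]_(p, q)) : R :=
  sup [set enorm (x *m A) | x in [set x : 'rV[R]_p | enorm x <= 1]].

(* The projection R^(m+1) -> R^m onto the last m coordinates, as a matrix
   acting on row vectors on the right: (x *m projP)_j = x_(j+1). *)
Definition projP {R : realType} {m : nat} : 'M[R]_(m.+1, m) :=
  \matrix_(i, j) (i == lift ord0 j)%:R.

Definition bounded_var_vec {R : realType} {k : nat} (a b : R)
    (f : R -> 'rV[R]_k) : Prop :=
  exists M : R, forall s : seq R,
    sorted <=%R s -> all (fun t => (a <= t) && (t <= b)) s ->
    \sum_(i < (size s).-1) enorm (f (nth 0 s i.+1) - f (nth 0 s i)) <= M.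

(* Main.v *)
Require Import Defs.
From HB Require Import structures.
From mathcomp Require Import all_boot all_order all_algebra.
From mathcomp Require Import all_classical all_reals all_analysis.
From mathcomp Require Import ring lra zify.
From Stdlib Require Classical_Prop.
Import Order.TTheory GRing.Theory Num.Theory.
Import numFieldNormedType.Exports.
Local Open Scope classical_set_scope.
Local Open Scope ring_scope.
Set Implicit Arguments. Unset Strict Implicit.


Lemma enorm_ge_coord (R : realType) k (v : 'rV[R]_k) i : `|v ord0 i| <= enorm v.
Proof.
rewrite /enorm -(sqrtr_sqr (v ord0 i)) ler_wsqrtr //.
rewrite (bigD1 i) //= lerDl sumr_ge0 // => j _; exact: sqr_ge0.
Qed.

Lemma enorm_ge0 (R : realType) k (v : 'rV[R]_k) : 0 <= enorm v.
Proof. exact: sqrtr_ge0. Qed.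

Lemma enormN (R : realType) k (v : 'rV[R]_k) : enorm (- v) = enorm v.
Proof. by rewrite /enorm; congr Num.sqrt; apply: eq_bigr => i _; rewrite mxE sqrrN. Qed.

Lemma enorm_sub_sym (R : realType) k (u v : 'rV[R]_k) : enorm (u - v) = enorm (v - u).
Proof. by rewrite -enormN opprB. Qed.

Lemma nat_close (R : realType) (a b : nat) : `|a%:R - b%:R : R| < 1 -> a = b.
Proof.
wlog ab : a b / (a <= b)%N.
  move=> W h; case: (leqP a b) => [ab|ba]; first exact: W.
  by apply/esym/W; [exact: ltnW | rewrite distrC].
move=> h; apply/eqP; rewrite eqn_leq ab /=; apply: contraTT h => ba.
rewrite -leNgt distrC ger0_norm; last by rewrite subr_ge0 ler_nat.
rewrite -natrB // ler1n subn_gt0; by rewrite ltnNge.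
Qed.

Lemma div_est (R : realType) (x y x' y' d t L : R) :
  0 < t -> 0 <= d -> 4 * d <= t -> `|x - x'| <= 2 * d -> `|y - y'| <= 2 * d ->
  `|x'| <= 2 * L -> t <= `|y| ->
  `|x / y - x' / y'| <= (2 / t + 8 * L / t ^+ 2) * d.
Proof.
move=> t0 d0 td hx hy hx' ty.
have hy' : t / 2 <= `|y'|.
  have := ler_distD y y' 0; rewrite !subr0 => h.
  have : `|y| <= `|y - y'| + `|y'|.
    by have := ler_normD (y - y') y'; rewrite subrK.
  lra.
have y0 : 0 < `|y| by lra.
have y'0 : 0 < `|y'| by lra.
have yn0 : y != 0 by rewrite -normr_gt0.
have y'n0 : y' != 0 by rewrite -normr_gt0.
have -> : x / y - x' / y' = (x - x') / y + x' * (y' - y) / (y * y').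
  by field; apply/andP.
apply: le_trans (ler_normD _ _) _.
rewrite !normrM !normfV normrM.
have L0 : 0 <= L by have := normr_ge0 x'; lra.
have i1 : `|y|^-1 <= t^-1 by rewrite lef_pV2 // posrE.
have i2 : `|y'|^-1 <= (t/2)^-1 by rewrite lef_pV2 // posrE; lra.
have e1 : `|x - x'| * `|y|^-1 <= 2 * d * t^-1.
  by apply: ler_pM => //; rewrite invr_ge0.
have e2 : `|x'| * `|y' - y| * (`|y|^-1 * `|y'|^-1) <= 2 * L * (2 * d) * (t^-1 * (t/2)^-1).
  apply: ler_pM; rewrite ?mulr_ge0 ?invr_ge0 //.
  - by apply: ler_pM => //; rewrite distrC.
  - by apply: ler_pM => //; rewrite invr_ge0.
rewrite invfM.
apply: le_trans (lerD e1 e2) _.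
rewrite le_eqVlt; apply/orP; left; apply/eqP.
field. by rewrite gt_eqF.
Qed.

Definition BVL (R : realType) k (a b L : R) (g : R -> 'rV[R]_k) :=
  forall s : seq R,
    sorted <=%R s -> all (fun t => (a <= t) && (t <= b)) s ->
    \sum_(i < (size s).-1) enorm (g (nth 0 s i.+1) - g (nth 0 s i)) <= L.

Definition sepd (R : realType) k (D : set R) (g : R -> 'rV[R]_k) (d : R) (s : seq R) :=
  [/\ uniq s, (forall x, x \in s -> D x) &
   (forall x y, x \in s -> y \in s -> x != y -> d <= enorm (g x - g y))].

Lemma sep_bound (R : realType) k (D : set R) (g : R -> 'rV[R]_k) (a b L d : R) s :
  (forall t, D t -> a <= t <= b) -> BVL a b L g -> sepd D g d s ->
  ((size s).-1)%:R * d <= L.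
Proof.
move=> Dab bv [us sD sg].
set s' := sort <=%R s.
have ss : sorted <=%R s' by apply: sort_sorted; exact: le_total.
have ms : forall x, (x \in s') = (x \in s) by move=> x; rewrite mem_sort.
have us' : uniq s' by rewrite sort_uniq.
have al : all (fun t => (a <= t) && (t <= b)) s'.
  by apply/allP => x; rewrite ms => /sD /Dab.
have := bv s' ss al; rewrite size_sort; apply: le_trans.
have -> : (size s).-1%:R * d = \sum_(i < (size s).-1) d.
  by rewrite sumr_const card_ord mulr_natl.
apply: ler_sum => i _.
have hi : (i.+1 < size s')%N by rewrite size_sort; case: (size s) i => [|n] [j hj] //=.
have hi' : (i < size s')%N by apply: ltnW.
apply: sg; rewrite -?ms ?mem_nth //.
by rewrite nth_uniq // eqn_leq ltnn.
Qed.

Lemma sep_net (R : realType) k (D : set R) (g : R -> 'rV[R]_k) (a b L d : R) :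
  0 < d -> (forall t, D t -> a <= t <= b) -> BVL a b L g ->
  exists s, sepd D g d s /\ forall t, D t -> exists2 p, p \in s & enorm (g t - g p) < d.
Proof.
move=> d0 Dab bv.
apply: Classical_Prop.NNPP => H.
have ext : forall s, sepd D g d s -> exists t, D t /\ forall p, p \in s -> d <= enorm (g t - g p).
  move=> s ss; apply: Classical_Prop.NNPP => H2; apply: H; exists s; split => // t Dt.
  apply: Classical_Prop.NNPP => H3; apply: H2; exists t; split => // p ps.
  rewrite leNgt; apply/negP => hp; apply: H3; by exists p.
have all_n : forall n, exists s, sepd D g d s /\ size s = n.
  elim=> [|n [s [ss sz]]]; first by exists [::]; split => //; split.
  have [t [Dt tf]] := ext s ss.
  case: ss => [us sD sg].
  exists (t :: s); split; last by rewrite /= sz.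
  split.
  - rewrite /= us andbT; apply/negP => ts.
    by have := tf t ts; rewrite subrr /enorm big1 ?sqrtr0 ?mxE; [lra| move=> i _; rewrite mxE expr0n].
  - by move=> x; rewrite inE => /orP[/eqP->|/sD].
  - move=> x y; rewrite !inE => /orP[/eqP->|xs] /orP[/eqP->|ys] xy.
    + by rewrite eqxx in xy.
    + by apply: tf.
    + by rewrite enorm_sub_sym; apply: tf.
    + by apply: sg.
have [s [ss sz]] := all_n (Num.trunc (L / d)).+2.
have := sep_bound Dab bv ss; rewrite sz /=.
rewrite -ler_pdivlMr // => h.
have := truncnS_gt (L / d); lra.
Qed.


Lemma grid (R : realType) m (M : nat) (c : 'rV[R]_m) (r : R) (Z : seq 'rV[R]_m) :
  0 < r -> (0 < M)%N -> (size Z < M ^ m)%N ->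
  exists y : 'rV[R]_m,
    (forall j, `|y ord0 j - c ord0 j| + r / (3 * M%:R + 1) <= r) /\
    (forall z, z \in Z -> exists j, r / (3 * M%:R + 1) * (3/2) <= `|y ord0 j - z ord0 j|).
Proof.
move=> r0 M0 sZ.
set h := r / (3 * M%:R + 1).
have h0 : 0 < h by rewrite divr_gt0 // ltr_wpDl // mulr_ge0.
pose G (u : {ffun 'I_m -> 'I_M}) : 'rV[R]_m := \row_j (c ord0 j + 3 * h * (u j : nat)%:R).
pose hit u (z : 'rV[R]_m) := [forall j, `|G u ord0 j - z ord0 j| < h * (3/2)].
have uniq_hit : forall u v z, hit u z -> hit v z -> u = v.
  move=> u v z /forallP hu /forallP hv; apply/ffunP => j; apply: val_inj => /=.
  apply: (@nat_close R).
  have := hu j; have := hv j; rewrite !mxE => h1 h2.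
  have h3 := ler_distD (z ord0 j) (G u ord0 j) (G v ord0 j).
  rewrite [`|z ord0 j - _|]distrC in h3.
  move: h3; rewrite !mxE.
  have -> : c ord0 j + 3 * h * (u j : nat)%:R - (c ord0 j + 3 * h * (v j : nat)%:R)
     = (3 * h) * ((u j : nat)%:R - (v j : nat)%:R) by ring.
  rewrite normrM (gtr0_norm (_ : 0 < 3 * h)); last by rewrite mulr_gt0.
  move=> h3.
  have : 3 * h * `|(u j : nat)%:R - (v j : nat)%:R : R| < 3 * h * 1 by lra.
  by rewrite ltr_pM2l // mulr_gt0.
pose P := pmap (fun z => [pick u | hit u z]) Z.
have sP : (size P <= size Z)%N by rewrite size_pmap count_size.
have [u uP] : exists u, u \notin P.
  apply: Classical_Prop.NNPP => H.
  have allin : forall u, u \in P.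
    move=> u; apply: Classical_Prop.NNPP => H2; apply: H; exists u; exact/negP.
  have : (#|{ffun 'I_m -> 'I_M}| <= size P)%N.
    rewrite cardE; apply: uniq_leq_size; first exact: enum_uniq.
    by move=> x _; exact: allin.
  rewrite card_ffun !card_ord => h1.
  by have := leq_ltn_trans (leq_trans h1 sP) sZ; rewrite ltnn.
exists (G u); split.
  move=> j; rewrite mxE addrAC subrr add0r.
  rewrite ger0_norm; last by rewrite mulr_ge0 // mulr_ge0 // ltW.
  have uj : ((u j : nat)%:R <= M%:R - 1 :> R).
    by rewrite lerBrDr natr1 ler_nat ltn_ord.
  have : 3 * h * (u j : nat)%:R <= 3 * h * (M%:R - 1).
    by rewrite ler_wpM2l // mulr_ge0 // ltW.
  have hr : h * (3 * M%:R + 1) = r.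
    by rewrite /h mulrC mulrA [_ * r]mulrC -mulrA mulfV ?mulr1 // gt_eqF // ltr_wpDl // mulr_ge0.
  nra.
move=> z zZ.
have nh : ~~ hit u z.
  apply/negP => hz.
  move: uP; rewrite mem_pmap; apply/negP/negPn/mapP.
  exists z => //.
  case: pickP => [v hv|hn]; first by rewrite (uniq_hit _ _ _ hv hz).
  by have := hn u; rewrite hz.
move/forallPn: nh => [j]; rewrite -leNgt => hj; by exists j.
Qed.

Definition ctr (R : realType) m (g : R -> 'rV[R]_m.+1) (s t : R) : 'rV[R]_m :=
  \row_j ((g s - g t) ord0 (lift ord0 j) / (g s - g t) ord0 ord0).

Definition Sth (R : realType) m (D : set R) (g : R -> 'rV[R]_m.+1) (th : R) : set 'rV[R]_m :=
  [set v | exists s t, [/\ D s, D t, th <= `|(g s - g t) ord0 ord0| & v = ctr g s t]].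

Lemma BV_L0 (R : realType) k (a b L : R) (g : R -> 'rV[R]_k) : BVL a b L g -> 0 <= L.
Proof. by move=> bv; have := bv [::] isT isT; rewrite big_ord0. Qed.

Lemma BV_coord (R : realType) k (D : set R) (g : R -> 'rV[R]_k) (a b L : R) :
  (forall t, D t -> a <= t <= b) -> BVL a b L g ->
  forall x y, D x -> D y -> forall i, `|(g x - g y) ord0 i| <= 2 * L.
Proof.
move=> Dab bv.
have h1 : forall x, D x -> forall i, `|(g x - g a) ord0 i| <= L.
  move=> x Dx i; have /andP[ax xb] := Dab x Dx.
  have := bv [:: a; x]; rewrite /= ax andbT lexx xb (le_trans ax xb) /= => /(_ isT isT).
  rewrite big_ord1 /=; apply: le_trans; exact: enorm_ge_coord.
move=> x y Dx Dy i.
have -> : (g x - g y) ord0 i = (g x - g a) ord0 i - (g y - g a) ord0 i by rewrite !mxE; ring.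
apply: le_trans (ler_normB _ _) _.
have := h1 x Dx i; have := h1 y Dy i; lra.
Qed.


Lemma core (R : realType) m (hm : (3 <= m)%N) (D : set R) (g : R -> 'rV[R]_m.+1)
    (a b L th : R) (c : 'rV[R]_m) (r : R) :
  (forall t, D t -> a <= t <= b) -> BVL a b L g -> 0 < th -> 0 < r ->
  exists (y : 'rV[R]_m) (h : R), 0 < h /\ forall x : 'rV[R]_m, (forall j, `|x ord0 j - y ord0 j| < h) ->
     (forall j, `|x ord0 j - c ord0 j| < r) /\ ~ Sth D g th x.
Proof.
move=> Dab bv th0 r0.
have L0 := BV_L0 bv.
have B := BV_coord Dab bv.
set K := 2 / th + 8 * L / th ^+ 2.
have K0 : 0 < K.
  have : 0 < 2 / th by rewrite divr_gt0.
  have : 0 <= 8 * L / th ^+ 2 by apply: divr_ge0; [lra|exact: sqr_ge0].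
  rewrite /K; lra.
set C := 2 * K * L / r.
have C0 : 0 <= C by rewrite /C; apply: divr_ge0; [nra|lra].
set X := (4 * C + 1) ^+ 2 + 2 * r / (th * K).
set M := (Num.trunc X).+1.
have MX : X < M%:R by exact: truncnS_gt.
have X1 : (4 * C + 1) ^+ 2 <= X.
  rewrite /X lerDl; apply: divr_ge0; [lra|nra].
have X2 : 2 * r / (th * K) <= X by rewrite /X lerDr sqr_ge0.
have M1 : 1 <= M%:R :> R by rewrite ler1n.
set h := r / (3 * M%:R + 1).
have h0 : 0 < h by rewrite divr_gt0 // ltr_wpDl // mulr_ge0.
have hr : h * (3 * M%:R + 1) = r.
  by rewrite /h mulrC mulrA [_ * r]mulrC -mulrA mulfV ?mulr1 // gt_eqF // ltr_wpDl // mulr_ge0.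
set d := h / (2 * K).
have d0 : 0 < d by rewrite divr_gt0 // mulr_gt0.
have Kd : K * d = h / 2.
  by rewrite /d; field; rewrite gt_eqF.
have A : 2 * r < M%:R * (th * K).
  rewrite -ltr_pdivrMr ?mulr_gt0 //; lra.
have dth : 4 * d <= th.
  have hK : 2 * h < th * K by nra.
  have : 4 * d * K < th * K by nra.
  rewrite ltr_pM2r //; exact: ltW.
have [s [[us sD sg] net]] := sep_net d0 Dab bv.
have Nb : (size s)%:R <= L / d + 1.
  have := sep_bound Dab bv (And3 us sD sg).
  rewrite -ler_pdivlMr // => h1.
  have : (size s)%:R <= (size s).-1%:R + 1 :> R.
    by case: (size s) => [|n] //=; rewrite ?natr1 // add0r ler01.
  lra.
set Z := [seq ctr g p q | p <- s, q <- s].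
have sZ : (size Z < M ^ m)%N.
  rewrite size_allpairs -(ltr_nat R) natrM natrX.
  have M3 : M%:R ^+ 3 <= M%:R ^+ m :> R.
    by rewrite -!natrX ler_nat leq_pexp2l.
  have Ld : L / d = C * (3 * M%:R + 1).
    rewrite /d /C -hr; field.
    by rewrite !gt_eqF // ltr_wpDl // mulr_ge0.
  have N1 : (size s)%:R <= (4 * C + 1) * M%:R :> R by nra.
  have N0 : 0 <= (size s)%:R :> R by [].
  have : (size s)%:R * (size s)%:R <= ((4 * C + 1) * M%:R) ^+ 2 :> R.
    by rewrite expr2; apply: ler_pM.
  have : ((4 * C + 1) * M%:R) ^+ 2 < M%:R ^+ 3 :> R.
    have P2 : 0 < M%:R ^+ 2 :> R by rewrite exprn_gt0 //; lra.
    rewrite exprMn [M%:R ^+ 3]exprS ltr_pM2r //; lra.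
  lra.
have M0 : (0 < M)%N by [].
have [y [yc yZ]] := grid c r0 M0 sZ.
exists y, h; split => // x xy; split.
  move=> j; have := yc j; have := xy j; rewrite -/h.
  have := ler_distD (y ord0 j) (x ord0 j) (c ord0 j); lra.
move=> [s1 [t1 [Ds1 Dt1 ths xE]]].
have [p ps hp] := net s1 Ds1.
have [q qs hq] := net t1 Dt1.
have zZ : ctr g p q \in Z by apply: allpairs_f.
have [j hj] := yZ _ zZ.
rewrite -/h in hj.
have co : forall i, `|(g s1 - g t1) ord0 i - (g p - g q) ord0 i| <= 2 * d.
  move=> i.
  have -> : (g s1 - g t1) ord0 i - (g p - g q) ord0 i =
            (g s1 - g p) ord0 i - (g t1 - g q) ord0 i by rewrite !mxE; ring.
  apply: le_trans (ler_normB _ _) _.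
  have := le_lt_trans (enorm_ge_coord _ i) hp.
  have := le_lt_trans (enorm_ge_coord _ i) hq.
  lra.
have xz : `|x ord0 j - ctr g p q ord0 j| <= h / 2.
  rewrite xE !mxE -Kd; apply: div_est => //.
  - exact: ltW.
  - by have := co (lift ord0 j); rewrite !mxE.
  - by have := co ord0; rewrite !mxE.
  - by have := B p q (sD p ps) (sD q qs) (lift ord0 j); rewrite !mxE.
  - by move: ths; rewrite !mxE.
have := xy j; rewrite distrC; have := ler_distD (x ord0 j) (y ord0 j) (ctr g p q ord0 j); lra.
Qed.


Definition rVc (R : realType) m := 'rV[R]_m.
HB.instance Definition _ (R : realType) m := NormedModule.copy (rVc R m) ('rV[R]_m).
HB.instance Definition _ (R : realType) m := Complete.copy (rVc R m) ('rV[R]_m).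

Lemma baire_step (R : realType) m (hm : (3 <= m)%N) (D : set R) (g : R -> 'rV[R]_m.+1)
    (a b L e : R) :
  (forall t, D t -> a <= t <= b) -> BVL a b L g -> 0 < e ->
  exists w : 'rV[R]_m, (forall j, `|w ord0 j| < e) /\
    forall k, ~ Sth D g (k.+1%:R^-1) w.
Proof.
move=> Dab bv e0.
pose S k : set (rVc R m) := Sth D g (k.+1%:R^-1).
pose F k : set (rVc R m) := ~` closure (S k).
have oF : forall k, open (F k) /\ dense (F k).
  move=> k; split; first exact/closed_openC/closed_closure.
  move=> O [x Ox] oO.
  have /nbhs_ballP[r r0 sub] : nbhs x O by apply: open_nbhs_nbhs.
  have th0 : 0 < k.+1%:R^-1 :> R by rewrite invr_gt0.
  have [y [h [h0 Hy]]] := core hm x Dab bv th0 r0.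
  exists y; split.
    apply: sub; split => // i j; rewrite (ord1 i).
    have yy : forall l, `|y ord0 l - y ord0 l| < h by move=> l; rewrite subrr normr0.
    have [+ _] := Hy y yy.
    by move=> /(_ j); rewrite distrC.
  move=> cl.
  have [v [Sv bv']] := cl (ball (y : rVc R m) h) (nbhsx_ballx (y : rVc R m) h h0).
  have vy : forall j, `|v ord0 j - y ord0 j| < h.
    by move=> j; have [_ /(_ ord0 j)] := bv'; rewrite /ball /= distrC.
  have [_ nS] := Hy v vy.
  exact: nS Sv.
have := @Baire R (rVc R m) F oF (ball (0 : rVc R m) e) _ (ball_open _ _).
case; first by exists 0; exact: ballxx.
move=> w [bw Fw]; exists w; split.
  move=> j; have [_ /(_ ord0 j)] := bw; by rewrite /ball /= mxE sub0r normrN.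
move=> k Sw; apply: (Fw k I); exact: subset_closure.
Qed.


Lemma mulA_entry (R : realType) k m (x : 'rV[R]_k.+1) (w : 'rV[R]_m) j :
  (x *m \matrix_(i, l) ((i == ord0)%:R * w ord0 l)) ord0 j = x ord0 ord0 * w ord0 j.
Proof.
rewrite !mxE (bigD1 ord0) //= !mxE eqxx mul1r big1 ?addr0 // => i ni.
by rewrite mxE (negbTE ni) mul0r mulr0.
Qed.

Lemma entryB (R : realType) p q (M N : 'M[R]_(p, q)) i j : (M - N) i j = M i j - N i j.
Proof. by rewrite !mxE. Qed.

Lemma mulP_entry (R : realType) m (x : 'rV[R]_m.+1) j :
  (x *m projP) ord0 j = x ord0 (lift ord0 j).
Proof.
rewrite !mxE (bigD1 (lift ord0 j)) //= !mxE eqxx mulr1 big1 ?addr0 // => i ni.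
by rewrite mxE (negbTE ni) mulr0.
Qed.

Lemma enorm_scale (R : realType) m (c : R) (w : 'rV[R]_m) :
  enorm (\row_j (c * w ord0 j)) = `|c| * enorm w.
Proof.
rewrite /enorm -sqrtr_sqr -sqrtrM ?sqr_ge0 //; congr Num.sqrt.
rewrite mulr_sumr; apply: eq_bigr => j _; rewrite mxE; ring.
Qed.

Lemma opnorm_bound (R : realType) m (w : 'rV[R]_m) :
  opnorm (- \matrix_(i, l) ((i == ord0 :> 'I_m.+1)%:R * w ord0 l)) <= enorm w.
Proof.
apply: ge_sup.
  by exists (enorm ((0 : 'rV[R]_m.+1) *m (- \matrix_(i, l) ((i == ord0 :> 'I_m.+1)%:R * w ord0 l)))); exists 0 => //=;
     rewrite /enorm big1 ?sqrtr0 ?ler01 // => i _; rewrite mxE expr0n.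
move=> _ [x xn <-].
have -> : x *m (- \matrix_(i, l) ((i == ord0 :> 'I_m.+1)%:R * w ord0 l)) = - \row_j (x ord0 ord0 * w ord0 j).
  by rewrite mulmxN; congr (- _); apply/rowP => j; rewrite mulA_entry mxE.
rewrite enormN enorm_scale.
have := enorm_ge_coord x ord0; have := enorm_ge0 w; move: xn => /= xn; nra.
Qed.

Lemma enorm_small (R : realType) m (w : 'rV[R]_m) (e : R) :
  0 < e -> (forall j, `|w ord0 j| < e / m.+1%:R) -> enorm w < e.
Proof.
move=> e0 hw.
rewrite /enorm (_ : e = Num.sqrt (e ^+ 2)); last by rewrite sqrtr_sqr gtr0_norm.
rewrite ltr_sqrt ?exprn_gt0 //.
set e' := e / m.+1%:R.
have e'0 : 0 < e' by rewrite divr_gt0.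
apply: (@le_lt_trans _ _ (\sum_(j < m) e' ^+ 2)).
  apply: ler_sum => j _; rewrite -real_normK ?num_real //.
  have := hw j; rewrite -/e'; have := normr_ge0 (w ord0 j); nra.
rewrite sumr_const card_ord.
have -> : e ^+ 2 = e' ^+ 2 * (m.+1%:R ^+ 2).
  by rewrite /e'; field; rewrite addrC natr1 pnatr_eq0.
rewrite -mulr_natr.
have mm : (m%:R : R) < m.+1%:R ^+ 2 by rewrite -natrX ltr_nat; nia.
have : 0 < e' ^+ 2 by rewrite exprn_gt0.
nra.
Qed.

Unset Implicit Arguments.
Theorem lemma5p2 (R : realType) (m : nat) (hm : (3 <= m)%N)
    (eps : R) (heps : 0 < eps) (D : set R) (gamma : R -> 'rV[R]_m.+1) :
  ((exists a b : R, a < b /\ D = `[a, b]%classic /\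
       {within (`[a, b]%classic : set R), continuous gamma} /\ bounded_var_vec a b gamma)
   \/
   (D = (`[0, 1[%classic : set R) /\ continuous gamma /\ (forall t, gamma (t + 1) = gamma t)
      /\ bounded_var_vec 0 1 gamma)) ->
  set_inj D gamma ->
  exists T : 'M[R]_(m.+1, m),
    opnorm (T - projP) < eps /\ set_inj D (fun t => gamma t *m T).
Proof.
move=> H inj.
have [a [b [L [Dab bv]]]] : exists a b L, (forall t, D t -> a <= t <= b) /\ BVL a b L gamma.
  case: H => [[a [b [_ [-> [_ [L bv]]]]]]|[-> [_ [_ [L bv]]]]].
    by exists a, b, L; split => // t /=; rewrite in_itv.
  exists 0, 1, L; split => // t /=; rewrite in_itv /= => /andP[t0 t1].
  by rewrite t0 ltW.
have e0 : 0 < eps / m.+1%:R by rewrite divr_gt0.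
have [w [wsm nS]] := baire_step hm Dab bv e0.
pose A := \matrix_(i, l) ((i == ord0 :> 'I_m.+1)%:R * w ord0 l).
exists (projP - A); split.
  rewrite addrAC subrr add0r.
  exact: le_lt_trans (opnorm_bound w) (enorm_small heps wsm).
move=> s t Ds Dt /= eq.
set dv := gamma s - gamma t.
have dT : dv *m (projP - A) = 0 by rewrite /dv mulmxBl eq subrr.
have dvE : dv = gamma s - gamma t by [].
clearbody dv.
have ent : forall j : 'I_m, dv ord0 (lift ord0 j) = dv ord0 ord0 * w ord0 j.
  move=> j; have := congr1 (fun M : 'M[R]_(1, m) => M ord0 j) dT.
  rewrite mulmxBr entryB mulP_entry /A mulA_entry mxE => /eqP.
  by rewrite subr_eq0 => /eqP.
have [d0|d0] := eqVneq (dv ord0 ord0) 0.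
  apply: inj => //; apply/eqP; rewrite -subr_eq0 -dvE; apply/eqP/rowP => i.
  rewrite [RHS]mxE.
  case: (unliftP ord0 i) => [j ->|->]; last by rewrite d0.
  by rewrite ent d0 mul0r.
exfalso.
have ad : 0 < `|dv ord0 ord0| by rewrite normr_gt0.
set k := Num.trunc (`|dv ord0 ord0|^-1).
apply: (nS k); exists s, t; split; [exact: set_mem Ds|exact: set_mem Dt| |].
  rewrite -dvE -(invrK `|dv ord0 ord0|) lef_pV2 ?posrE ?invr_gt0 //.
  exact/ltW/truncnS_gt.
apply/rowP => j; rewrite /ctr mxE -dvE ent.
by field.
Qed.
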